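(* Let $G$ be a TDLC-group and $P$ a finitely generated projective discrete $\mathbb{Q}[G]$-module. Then the filling pseudo-norm of $P$ is a norm. Moreover, if $P$ is a direct summand of a finitely generated proper permutation module $\mathbb{Q}[\Omega]$, then $P$ is undistorted in $\mathbb{Q}[\Omega]$, i.e. the restriction of $\|\cdot\|_1^\Omega$ to $P$ is equivalent to the filling pseudo-norm of $P$.
   Context: A TDLC-group is a totally disconnected locally compact Hausdorff topological group. A discrete $\mathbb{Q}[G]$-module is a left $\mathbb{Q}[G]$-module in which every element has open stabilizer; projectivity refers to the category of discrete modules, in which a module is projective iff it is a direct summand of a proper permutation module. A $G$-set $\Omega$ is proper if all point stabilizers are compact open; $\mathbb{Q}[\Omega]$ is then a proper permutation module, finitely generated iff $\Omega/G$ is finite, with $\ell_1$-norm $\|\sum a_\omega\omega\|_1^\Omega=\sum|a_\omega|$. For a surjection $\partial:\mathbb{Q}[\Omega]\twoheadrightarrow M$ from a finitely generated proper permutation module, the filling pseudo-norm is $\|m\|_\partial=\inf\{\|x\|_1^\Omega:\partial(x)=m\}$; any two filling pseudo-norms on $M$ are equivalent (equivalence: each bounded by a constant times the other). *)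

(* Defs.v *)
From Stdlib Require List.
From HB Require Import structures.
From mathcomp Require Import all_boot all_order all_algebra.
Set Implicit Arguments. Unset Strict Implicit. Unset Printing Implicit Defensive.
Import Order.TTheory GRing.Theory Num.Theory.
Local Open Scope ring_scope.

Definition is_topology (T : Type) (op : (T -> Prop) -> Prop) : Prop :=
  [/\ op (fun _ => True),
      (forall (I : Type) (U : I -> T -> Prop), (forall i, op (U i)) ->
          op (fun x => exists i, U i x)) &
      (forall U V, op U -> op V -> op (fun x => U x /\ V x))].

Definition compact (T : Type) (op : (T -> Prop) -> Prop) (K : T -> Prop) : Prop :=
  forall (I : Type) (U : I -> T -> Prop), (forall i, op (U i)) ->
    (forall x, K x -> exists i, U i x) ->
    exists s : list I, forall x, K x -> exists i, List.In i s /\ U i x.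

Definition connected (T : Type) (op : (T -> Prop) -> Prop) (S : T -> Prop) : Prop :=
  forall U V, op U -> op V -> (forall x, S x -> U x \/ V x) ->
    (forall x, S x -> U x -> V x -> False) ->
    (forall x, S x -> U x) \/ (forall x, S x -> V x).

Record tdlc := TDLC {
  gcar :> Type;
  gmul : gcar -> gcar -> gcar;
  ginv : gcar -> gcar;
  gone : gcar;
  gmulA : forall x y z, gmul x (gmul y z) = gmul (gmul x y) z;
  gmul1 : forall x, gmul gone x = x;
  gmulV : forall x, gmul (ginv x) x = gone;
  gopen : (gcar -> Prop) -> Prop;
  gtop : is_topology gopen;
  gmul_cont : forall U, gopen U -> forall x y, U (gmul x y) ->
     exists V W, [/\ gopen V, gopen W, V x, W y &
                     forall a b, V a -> W b -> U (gmul a b)];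
  ginv_cont : forall U, gopen U -> gopen (fun x => U (ginv x));
  ghaus : forall x y, x <> y -> exists U V, [/\ gopen U, gopen V, U x, V y &
                                             forall z, U z -> V z -> False];
  gloc_compact : forall x, exists U K, [/\ gopen U, U x, compact gopen K &
                                          forall z, U z -> K z];
  gtot_disc : forall S, connected gopen S -> forall x y, S x -> S y -> x = y
}.
Arguments gopen : clear implicits.
Arguments gone : clear implicits.

Record dmod (G : tdlc) := DMod {
  mcar :> lmodType rat;
  mact : G -> mcar -> mcar;
  mact_lin : forall g (a : rat) x y, mact g (a *: x + y) = a *: mact g x + mact g y;
  mact1 : forall x, mact (gone G) x = x;
  mactM : forall g h x, mact (gmul g h) x = mact g (mact h x);
  mact_disc : forall x, gopen G (fun g => mact g x = x)
}.
Arguments mact {G} _ _ _.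

Definition is_hom (G : tdlc) (M N : dmod G) (f : M -> N) : Prop :=
  (forall (a : rat) x y, f (a *: x + y) = a *: f x + f y) /\
  (forall g x, f (mact M g x) = mact N g (f x)).

Definition projective (G : tdlc) (P : dmod G) : Prop :=
  forall (M N : dmod G) (p : M -> N) (f : P -> N),
    is_hom p -> (forall n, exists m, p m = n) -> is_hom f ->
    exists h : P -> M, is_hom h /\ forall x, p (h x) = f x.

Definition fin_gen (G : tdlc) (P : dmod G) : Prop :=
  exists s : seq P, forall x : P, exists (n : nat) (a : 'I_n -> rat)
    (g : 'I_n -> G) (v : 'I_n -> P),
    (forall i, v i \in s) /\ x = \sum_(i < n) a i *: mact P (g i) (v i).

Record gset (G : tdlc) := GSet {
  scar :> eqType;
  sact : G -> scar -> scar;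
  sact1 : forall w, sact (gone G) w = w;
  sactM : forall g h w, sact (gmul g h) w = sact g (sact h w)
}.
Arguments sact {G} _ _ _.

Definition stab (G : tdlc) (O : gset G) (w : O) : G -> Prop :=
  fun g => sact O g w = w.

Definition proper_gset (G : tdlc) (O : gset G) : Prop :=
  forall w : O, gopen G (stab w) /\ compact (gopen G) (stab w).

Definition fin_orbits (G : tdlc) (O : gset G) : Prop :=
  exists s : seq O, forall w : O, exists2 w0, w0 \in s & exists g, w = sact O g w0.

(* An element of Q[O]: a finitely supported function O -> Q, together with
   a duplicate-free list containing its support. *)
Record qperm (G : tdlc) (O : gset G) := QPerm {
  coef : O -> rat;
  supp : seq O;
  supp_uniq : uniq supp;
  supp_cov : forall w, coef w != 0 -> w \in supp
}.
Arguments coef {G O} _ _.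
Arguments supp {G O} _.

Definition l1 (G : tdlc) (O : gset G) (x : qperm O) : rat :=
  \sum_(w <- supp x) `|coef x w|.

(* G-equivariant maps O -> M; these are exactly the restrictions to the basis
   of the Q[G]-homomorphisms Q[O] -> M *)
Definition equivariant (G : tdlc) (O : gset G) (M : dmod G) (d : O -> M) : Prop :=
  forall g w, d (sact O g w) = mact M g (d w).

Definition pmap (G : tdlc) (O : gset G) (M : dmod G) (d : O -> M) (x : qperm O) : M :=
  \sum_(w <- supp x) coef x w *: d w.

Definition surj_pmap (G : tdlc) (O : gset G) (M : dmod G) (d : O -> M) : Prop :=
  equivariant d /\ forall m : M, exists x : qperm O, pmap d x = m.

(* ---------- filling pseudo-norm ||m||_d = inf { ||x||_1 : d(x) = m } ---------- *)
(* c <= ||m||_d *)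
Definition fill_ge (G : tdlc) (O : gset G) (M : dmod G) (d : O -> M) (m : M) (c : rat) : Prop :=
  forall x : qperm O, pmap d x = m -> c <= l1 x.
(* ||m||_d <= c *)
Definition fill_le (G : tdlc) (O : gset G) (M : dmod G) (d : O -> M) (m : M) (c : rat) : Prop :=
  forall e : rat, 0 < e -> exists x : qperm O, pmap d x = m /\ l1 x <= c + e.

Definition filling_is_norm (G : tdlc) (O : gset G) (M : dmod G) (d : O -> M) : Prop :=
  forall m : M, m != 0 -> exists2 c : rat, 0 < c & fill_ge d m c.

Definition hom_to_qperm (G : tdlc) (P : dmod G) (O : gset G) (i : P -> qperm O) : Prop :=
  (forall (a : rat) p q w, coef (i (a *: p + q)) w = a * coef (i p) w + coef (i q) w) /\
  (forall g p w, coef (i (mact P g p)) w = coef (i p) (sact O (ginv g) w)).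

Definition direct_summand (G : tdlc) (P : dmod G) (O : gset G)
    (i : P -> qperm O) (r : O -> P) : Prop :=
  [/\ hom_to_qperm i, equivariant r & forall p, pmap r (i p) = p].

Definition undistorted (G : tdlc) (P : dmod G) (O O' : gset G)
    (i : P -> qperm O) (d : O' -> P) : Prop :=
  exists2 C : rat, 0 < C &
    forall p : P, fill_le d p (C * l1 (i p)) /\ fill_ge d p (l1 (i p) / C).

(* Main.v *)
Require Import Defs.
From HB Require Import structures.
From mathcomp Require Import all_boot all_order all_algebra.
From mathcomp Require Import boolp.
Set Implicit Arguments. Unset Strict Implicit. Unset Printing Implicit Defensive.
Import Order.TTheory GRing.Theory Num.Theory.
Local Open Scope ring_scope.
From mathcomp Require Import lra.
Lemma sum_filt (T : eqType) (V : nmodType) (p : pred T) (F : T -> V) s :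
  (forall w, ~~ p w -> F w = 0) -> \sum_(w <- s) F w = \sum_(w <- filter p s) F w.
Proof.
move=> h; rewrite big_filter [RHS]big_mkcond; apply: eq_bigr => w _.
by case: (boolP (p w)) => // /h ->.
Qed.

Lemma sum_indep (T : eqType) (V : nmodType) (f : T -> rat) (F : T -> V) s1 s2 :
  uniq s1 -> uniq s2 -> (forall w, f w != 0 -> w \in s1) ->
  (forall w, f w != 0 -> w \in s2) ->
  (forall w, f w = 0 -> F w = 0) -> \sum_(w <- s1) F w = \sum_(w <- s2) F w.
Proof.
move=> u1 u2 c1 c2 F0.
have h : forall w, ~~ (f w != 0) -> F w = 0 by move=> w; rewrite negbK => /eqP; apply: F0.
rewrite (sum_filt s1 h) (sum_filt s2 h).
apply: perm_big; apply: uniq_perm; rewrite ?filter_uniq //.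
move=> w; rewrite !mem_filter; case: (boolP (f w != 0)) => //= k.
by rewrite (c1 _ k) (c2 _ k).
Qed.
Section Grp.
Variable G : tdlc.
Local Notation "x * y" := (gmul x y).


Lemma gmulVr (x : G) : x * ginv x = (gone G).
Proof.
have e : ginv (ginv x) * ginv x = (gone G) by apply: gmulV.
rewrite -[x * ginv x]gmul1 -{1}e -gmulA (gmulA (ginv x)) gmulV gmul1.
exact: e.
Qed.

Lemma gmulr1 (x : G) : x * (gone G) = x.
Proof. by rewrite -(gmulV x) gmulA gmulVr gmul1. Qed.

Lemma ginv_uniq (a x : G) : a * x = (gone G) -> a = ginv x.
Proof. by move=> h; rewrite -[a]gmulr1 -(gmulVr x) gmulA h gmul1. Qed.

Lemma ginvM (x y : G) : ginv (x * y) = ginv y * ginv x.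
Proof.
symmetry; apply: ginv_uniq.
by rewrite -gmulA (gmulA (ginv x)) gmulV gmul1 gmulV.
Qed.

Lemma ginv1 : ginv (gone G) = (gone G).
Proof. by symmetry; apply: ginv_uniq; rewrite gmul1. Qed.

Variable O : gset G.
Lemma sactK (g : G) (w : O) : sact O (ginv g) (sact O g w) = w.
Proof. by rewrite -sactM gmulV sact1. Qed.
Lemma sactVK (g : G) (w : O) : sact O g (sact O (ginv g) w) = w.
Proof. by rewrite -sactM gmulVr sact1. Qed.
Lemma sact_inj (g : G) : injective (sact O g).
Proof. by move=> a b h; rewrite -(sactK g a) h sactK. Qed.
End Grp.

Lemma sum_mem_le (T : eqType) (F : T -> rat) (s : seq T) v :
  (forall w, 0 <= F w) -> v \in s -> F v <= \sum_(w <- s) F w.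
Proof.
move=> F0; elim: s => //= x s IH; rewrite in_cons big_cons => /orP [/eqP ->| h].
  by rewrite lerDl sumr_ge0.
by apply: le_trans (IH h) _; rewrite lerDr F0.
Qed.

Section Mact.
Variables (G : tdlc) (M : dmod G).
Lemma mact0 g : mact M g 0 = 0.
Proof.
have h := @mact_lin G M g 1 0 0; rewrite !scale1r addr0 in h.
by apply: (addrI (mact M g 0)); rewrite addr0 -h.
Qed.
Lemma mactD g x y : mact M g (x + y) = mact M g x + mact M g y.
Proof. by have h := @mact_lin G M g 1 x y; rewrite !scale1r in h. Qed.
Lemma mactZ g a x : mact M g (a *: x) = a *: mact M g x.
Proof. by have h := @mact_lin G M g a x 0; rewrite !addr0 mact0 addr0 in h. Qed.
Lemma mact_sum (T : Type) g (s : seq T) (a : T -> rat) (u : T -> M) :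
  mact M g (\sum_(v <- s) a v *: u v) = \sum_(v <- s) a v *: mact M g (u v).
Proof.
elim: s => [|x s IH]; first by rewrite !big_nil mact0.
by rewrite !big_cons mactD mactZ IH.
Qed.
End Mact.

Section Q.
Variables (G : tdlc) (O : gset G).

Definition covers (f : O -> rat) (s : seq O) := forall w, f w != 0 -> w \in s.

Lemma l1_any (x : qperm O) s : uniq s -> covers (coef x) s ->
  l1 x = \sum_(w <- s) `|coef x w|.
Proof.
move=> u c; rewrite /l1; apply: (sum_indep (f := coef x)) => //.
  exact: supp_uniq.
  exact: supp_cov.
by move=> w ->; rewrite normr0.
Qed.

Lemma pmap_any (M : dmod G) (d : O -> M) (x : qperm O) s : uniq s -> covers (coef x) s ->
  Defs.pmap d x = \sum_(w <- s) coef x w *: d w.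
Proof.
move=> u c; rewrite /Defs.pmap; apply: (sum_indep (f := coef x)) => //.
  exact: supp_uniq.
  exact: supp_cov.
by move=> w ->; rewrite scale0r.
Qed.

Lemma l1_ge0 (x : qperm O) : 0 <= l1 x.
Proof. by rewrite /l1; apply: sumr_ge0 => w _; apply: normr_ge0. Qed.

Lemma trans_uniq g (x : qperm O) : uniq (map (sact O g) (supp x)).
Proof. rewrite map_inj_uniq; [exact: supp_uniq | exact: sact_inj]. Qed.

Lemma trans_cov g (x : qperm O) :
  covers (fun w => coef x (sact O (ginv g) w)) (map (sact O g) (supp x)).
Proof.
move=> w /supp_cov h; apply/mapP; exists (sact O (ginv g) w) => //.
by rewrite sactVK.
Qed.

Definition qtrans g (x : qperm O) : qperm O :=
  @QPerm G O (fun w => coef x (sact O (ginv g) w)) (map (sact O g) (supp x))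
    (trans_uniq g x) (@trans_cov g x).

Lemma l1_transport (x y : qperm O) g :
  (forall w, coef y w = coef x (sact O (ginv g) w)) -> l1 y = l1 x.
Proof.
move=> h; rewrite (@l1_any y (map (sact O g) (supp x))) ?trans_uniq //; last first.
  by move=> w; rewrite h; apply: trans_cov.
by rewrite big_map /l1; apply: eq_bigr => v _; rewrite h sactK.
Qed.

Lemma pmap_transport (M : dmod G) (d : O -> M) (x y : qperm O) g :
  equivariant d ->
  (forall w, coef y w = coef x (sact O (ginv g) w)) -> Defs.pmap d y = mact M g (Defs.pmap d x).
Proof.
move=> eqd h; rewrite (@pmap_any _ _ y (map (sact O g) (supp x))) ?trans_uniq //; last first.
  by move=> w; rewrite h; apply: trans_cov.
rewrite big_map /Defs.pmap mact_sum; apply: eq_bigr => v _; by rewrite h sactK eqd.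
Qed.

Lemma l1_lin (z z1 z2 : qperm O) a :
  (forall w, coef z w = a * coef z1 w + coef z2 w) -> l1 z <= `|a| * l1 z1 + l1 z2.
Proof.
move=> h; set U := undup (supp z ++ supp z1 ++ supp z2).
have uU : uniq U by apply: undup_uniq.
have cov : forall y, supp y = supp z \/ supp y = supp z1 \/ supp y = supp z2 ->
   covers (coef y) U.
  move=> y e w /supp_cov; rewrite mem_undup !mem_cat.
  by case: e => [->|[->|->]] ->; rewrite ?orbT.
rewrite (l1_any uU (cov z (or_introl erefl))).
rewrite (l1_any uU (cov z1 (or_intror (or_introl erefl)))).
rewrite (l1_any uU (cov z2 (or_intror (or_intror erefl)))).
rewrite mulr_sumr -big_split /=; apply: ler_sum => w _.
by rewrite h -normrM; apply: ler_normD.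
Qed.
End Q.

Section Comb.
Variables (G : tdlc) (O : gset G) (T : eqType).
Variables (s : seq T) (a : T -> rat) (y : T -> qperm O).

Definition Ucomb := undup (flatten (map (fun v => supp (y v)) s)).

Lemma Ucomb_cov v : v \in s -> covers (coef (y v)) Ucomb.
Proof.
move=> vs w /supp_cov h; rewrite mem_undup; apply/flatten_mapP; by exists v.
Qed.

Lemma qcomb_cov : covers (fun w => \sum_(v <- s) a v * coef (y v) w) Ucomb.
Proof.
move=> w h.
case: (boolP (has (fun v => a v * coef (y v) w != 0) s)) => [/hasP [v vs nz] | /hasPn hn].
  by apply: (Ucomb_cov vs); move: nz; rewrite mulf_eq0 negb_or => /andP [].
move: h; rewrite big1_seq ?eqxx // => v /andP [_ vs].
by have := hn v vs; rewrite negbK => /eqP.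
Qed.

Definition qcomb : qperm O :=
  @QPerm G O (fun w => \sum_(v <- s) a v * coef (y v) w) Ucomb (undup_uniq _) qcomb_cov.

Lemma pmap_qcomb (M : dmod G) (d : O -> M) :
  Defs.pmap d qcomb = \sum_(v <- s) a v *: Defs.pmap d (y v).
Proof.
rewrite [LHS]/Defs.pmap /=.
under eq_bigr => w _ do rewrite scaler_suml.
rewrite exchange_big /=; apply: eq_big_seq => v vs.
rewrite (pmap_any d (undup_uniq _) (Ucomb_cov vs)) scaler_sumr.
by apply: eq_bigr => w _; rewrite scalerA.
Qed.

Lemma l1_qcomb : l1 qcomb <= \sum_(v <- s) `|a v| * l1 (y v).
Proof.
rewrite [l1 qcomb]/l1 /=.
apply: le_trans (_ : \sum_(w <- Ucomb) \sum_(v <- s) `|a v| * `|coef (y v) w| <= _).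
  apply: ler_sum => w _; apply: le_trans (ler_norm_sum _ _ _) _.
  by apply: ler_sum => v _; rewrite normrM.
rewrite exchange_big /=; rewrite le_eqVlt; apply/orP; left; apply/eqP.
apply: eq_big_seq => v vs; rewrite (l1_any (undup_uniq _) (Ucomb_cov vs)) mulr_sumr.
done.
Qed.
End Comb.

Section Hom.
Variables (G : tdlc) (P : dmod G) (O : gset G) (i : P -> qperm O).
Hypothesis hi : hom_to_qperm i.

Lemma coef_i0 w : coef (i 0) w = 0.
Proof.
have h := hi.1 1 0 0 w; rewrite scale1r addr0 in h; lra.
Qed.

Lemma l1_i0 : l1 (i 0) = 0.
Proof. by rewrite /l1 big1 // => w _; rewrite coef_i0 normr0. Qed.

Lemma l1_i_sum (T : Type) (s : seq T) (a : T -> rat) (u : T -> P) :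
  l1 (i (\sum_(v <- s) a v *: u v)) <= \sum_(v <- s) `|a v| * l1 (i (u v)).
Proof.
elim: s => [|x s IH]; first by rewrite !big_nil l1_i0.
rewrite !big_cons.
apply: le_trans (l1_lin (fun w => hi.1 (a x) (u x) _ w)) _.
by rewrite lerD2l.
Qed.

Lemma l1_i_act g p : l1 (i (mact P g p)) = l1 (i p).
Proof. apply: (l1_transport (g := g)) => w; exact: hi.2. Qed.
End Hom.

Lemma fill_ge_main (G : tdlc) (P : dmod G) (O O' : gset G) (i : P -> qperm O) (d : O' -> P) :
  hom_to_qperm i -> equivariant d -> fin_orbits O' ->
  exists2 C, 0 < C & forall x : qperm O', l1 (i (Defs.pmap d x)) <= C * l1 x.
Proof.
move=> hi eqd [s0 hs0].
set C := 1 + \sum_(w0 <- s0) l1 (i (d w0)).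
have S0 : 0 <= \sum_(w0 <- s0) l1 (i (d w0)) by apply: sumr_ge0 => w _; apply: l1_ge0.
have B : forall w, l1 (i (d w)) <= C.
  move=> w; have [w0 w0s [g ->]] := hs0 w.
  rewrite eqd (l1_i_act hi).
  have := @sum_mem_le _ (fun w => l1 (i (d w))) s0 w0 (fun w => l1_ge0 _) w0s; rewrite /C; lra.
exists C; first by rewrite /C; lra.
move=> x; rewrite /Defs.pmap; apply: le_trans (l1_i_sum hi _ _ _) _.
rewrite /l1 mulr_sumr; apply: ler_sum => w _.
by rewrite mulrC; apply: ler_wpM2r; [apply: normr_ge0 | apply: B].
Qed.

Lemma part2 (G : tdlc) (P : dmod G) (O : gset G) (i : P -> qperm O) (r : O -> P)
   (O' : gset G) (d : O' -> P) :
  fin_orbits O -> direct_summand i r -> fin_orbits O' -> surj_pmap d -> undistorted i d.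
Proof.
move=> [s0 hs0] [hi eqr rK] fo' [eqd surj].
have [C1 C1p HC1] := fill_ge_main hi eqd fo'.
have [x0 hx0] := choice (fun w : O => surj (r w)).
set C2 := 1 + \sum_(w0 <- s0) l1 (x0 w0).
have S0 : 0 <= \sum_(w0 <- s0) l1 (x0 w0) by apply: sumr_ge0 => w _; apply: l1_ge0.
have Y : forall w : O, exists y : qperm O', Defs.pmap d y = r w /\ l1 y <= C2.
  move=> w; have [w0 w0s [g ->]] := hs0 w.
  exists (qtrans g (x0 w0)); split.
    by rewrite (pmap_transport (x := x0 w0) (g := g) eqd) // hx0 eqr.
  rewrite (l1_transport (x := x0 w0) (g := g)) //.
  have := @sum_mem_le _ (fun w => l1 (x0 w)) s0 w0 (fun w => l1_ge0 _) w0s; rewrite /C2; lra.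
have [yf hyf] := choice Y.
exists (C1 + C2); first by rewrite /C2; lra.
move=> p; split.
  move=> e e0; exists (qcomb (supp (i p)) (coef (i p)) yf); split.
    rewrite pmap_qcomb; transitivity (Defs.pmap r (i p)); last exact: rK.
    rewrite [RHS]/Defs.pmap; apply: eq_bigr => w _.
    by rewrite (hyf w).1.
  apply: le_trans (l1_qcomb _ _ _) _.
  have h : \sum_(v <- supp (i p)) `|coef (i p) v| * l1 (yf v) <= C2 * l1 (i p).
    rewrite /l1 mulr_sumr; apply: ler_sum => w _.
    by rewrite mulrC; apply: ler_wpM2r; [apply: normr_ge0 | apply: (hyf w).2].
  have k : 0 <= C1 * l1 (i p) by apply: mulr_ge0; [apply: ltW | apply: l1_ge0].
  move: h k; rewrite -/(l1 (i p)) => h k; lra.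
move=> x px; rewrite ler_pdivrMr; last by rewrite /C2; lra.
have := HC1 x; rewrite px => h.
have k : 0 <= C2 * l1 x by apply: mulr_ge0; [rewrite /C2; lra | apply: l1_ge0].
lra.
Qed.

Section FSmod.
Variables (G : tdlc) (O : gset G).

Definition FS := {f : O -> rat | exists s : seq O, covers f s}.
HB.instance Definition _ := gen_eqMixin FS.
HB.instance Definition _ := gen_choiceMixin FS.

Lemma fs_eq (f g : FS) : (forall w, sval f w = sval g w) -> f = g.
Proof. by case: f g => [f pf] [g pg] /= h; apply: eq_exist; apply: funext. Qed.

Lemma fs0_p : exists s : seq O, covers (fun _ => 0 : rat) s.
Proof. by exists [::] => w; rewrite eqxx. Qed.
Definition fs0 : FS := exist _ _ fs0_p.

Lemma fsadd_p (f g : FS) : exists s : seq O, covers (fun w => sval f w + sval g w) s.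
Proof.
case: f g => [f [s1 c1]] [g [s2 c2]] /=; exists (s1 ++ s2) => w h.
rewrite mem_cat; case: (boolP (f w != 0)) => [/c1 -> //| ]; rewrite negbK => /eqP e.
by rewrite e add0r in h; rewrite (c2 _ h) orbT.
Qed.
Definition fsadd f g : FS := exist _ _ (fsadd_p f g).

Lemma fsscale_p (a : rat) (f : FS) : exists s : seq O, covers (fun w => a * sval f w) s.
Proof.
case: f => [f [s1 c1]] /=; exists s1 => w; rewrite mulf_eq0 negb_or => /andP [_].
exact: c1.
Qed.
Definition fsscale a f : FS := exist _ _ (fsscale_p a f).
Definition fsopp f : FS := fsscale (-1) f.

Lemma fsaddA : associative fsadd.
Proof. by move=> f g h; apply: fs_eq => w /=; rewrite addrA. Qed.
Lemma fsaddC : commutative fsadd.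
Proof. by move=> f g; apply: fs_eq => w /=; rewrite addrC. Qed.
Lemma fsadd0 : left_id fs0 fsadd.
Proof. by move=> f; apply: fs_eq => w /=; rewrite add0r. Qed.
Lemma fsaddN : left_inverse fs0 fsopp fsadd.
Proof. by move=> f; apply: fs_eq => w /=; rewrite mulN1r addNr. Qed.

HB.instance Definition _ := GRing.isZmodule.Build FS fsaddA fsaddC fsadd0 fsaddN.

Lemma fsscaleA a b v : fsscale a (fsscale b v) = fsscale (a * b) v.
Proof. by apply: fs_eq => w /=; rewrite mulrA. Qed.
Lemma fsscale1 : left_id 1 fsscale.
Proof. by move=> f; apply: fs_eq => w /=; rewrite mul1r. Qed.
Lemma fsscaleDr : right_distributive fsscale +%R.
Proof. by move=> a f g; apply: fs_eq => w /=; rewrite mulrDr. Qed.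
Lemma fsscaleDl v : {morph fsscale^~ v: a b / a + b}.
Proof. by move=> a b; apply: fs_eq => w /=; rewrite mulrDl. Qed.

HB.instance Definition _ := GRing.Zmodule_isLmodule.Build rat FS
  fsscaleA fsscale1 fsscaleDr fsscaleDl.

Lemma fsact_p (g : G) (f : FS) :
  exists s : seq O, covers (fun w => sval f (sact O (ginv g) w)) s.
Proof.
case: f => [f [s1 c1]] /=; exists (map (sact O g) s1) => w /c1 h.
by apply/mapP; exists (sact O (ginv g) w) => //; rewrite sactVK.
Qed.
Definition fsact g (f : FS) : FS := exist _ _ (fsact_p g f).

Lemma fsact_lin g (a : rat) (x y : FS) :
  fsact g (a *: x + y) = a *: fsact g x + fsact g y.
Proof. by apply: fs_eq. Qed.
Lemma fsact1 x : fsact (gone G) x = x.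
Proof. by apply: fs_eq => w /=; rewrite ginv1 sact1. Qed.
Lemma fsactM g h x : fsact (gmul g h) x = fsact g (fsact h x).
Proof. by apply: fs_eq => w /=; rewrite ginvM sactM. Qed.
End FSmod.

Section Disc.
Variables (G : tdlc) (O : gset G).
Hypothesis pO : proper_gset O.

Fixpoint Ustab (s : seq O) : G -> Prop :=
  match s with [::] => fun _ => True | w :: s => fun g => sact O g w = w /\ Ustab s g end.

Lemma Ustab_open s : gopen G (Ustab s).
Proof.
elim: s => [|w s IH] /=; first by case: (gtop G).
by case: (gtop G) => _ _ h; apply: h => //; case: (pO w).
Qed.

Lemma Ustab_spec s g : Ustab s g -> forall w, w \in s -> sact O g w = w.
Proof.
elim: s => //= v s IH [h1 h2] w; rewrite in_cons => /orP [/eqP -> //|].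
exact: IH.
Qed.

Lemma Ustab1 s : Ustab s (gone G).
Proof. by elim: s => //= w s IH; rewrite sact1. Qed.

Lemma fsact_disc (f : FS O) : gopen G (fun g => fsact g f = f).
Proof.
have [s cs] := svalP f.
set S := fun g => fsact g f = f.
have US : forall g, Ustab s g -> S g.
  move=> g /Ustab_spec h; apply: fs_eq => w /=.
  case: (boolP (sval f w != 0)) => [/cs ws | ].
    by congr (sval f _); apply: (@sact_inj G O g); rewrite sactVK (h w ws).
  rewrite negbK => /eqP fw0; rewrite fw0.
  case: (boolP (sval f (sact O (ginv g) w) != 0)) => [/cs vs | ]; last by rewrite negbK => /eqP.
  by have := h _ vs; rewrite sactVK => e; rewrite -e.
pose I := {W : G -> Prop | gopen G W /\ forall b, W b -> S b}.
have -> : S = (fun x => exists i : I, sval i x).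
  apply: funext => x; apply: propext; split; last by case=> [[W [oW WS]]] /= Wx; apply: WS.
  move=> Sx.
  have U1 : Ustab s (gmul (ginv x) x) by rewrite gmulV; apply: Ustab1.
  have [V [W [oV oW Vx Wx H]]] := gmul_cont (Ustab_open s) U1.
  have WS : forall b, W b -> S b.
    move=> b Wb; have := US _ (H _ _ Vx Wb) => e.
    rewrite /S -[b]gmul1 -(gmulVr x) -gmulA fsactM.
    by rewrite e Sx.
  by exists (exist _ W (conj oW WS)).
by case: (gtop G) => _ h _; apply: h => i; exact: (svalP i).1.
Qed.

Definition FSmod : dmod G := @DMod G (FS O) (@fsact G O) (@fsact_lin G O)
  (@fsact1 G O) (@fsactM G O) fsact_disc.
End Disc.

Lemma cov_undup (G : tdlc) (O : gset G) (z : qperm O) s :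
  (forall w, w \in supp z -> w \in s) -> covers (coef z) (undup s).
Proof. by move=> h w /supp_cov /h; rewrite mem_undup. Qed.

Lemma l1_pos_of_pmap (G : tdlc) (P : dmod G) (O : gset G) (d : O -> P) (z : qperm O) :
  Defs.pmap d z != 0 -> 0 < l1 z.
Proof.
move=> nz.
case: (boolP (has (fun w => coef z w != 0) (supp z))) => [/hasP [w ws cw] | /hasPn hn].
  apply: lt_le_trans (_ : 0 < `|coef z w|) _; first by rewrite normr_gt0.
  exact: (@sum_mem_le _ (fun w => `|coef z w|) (supp z) w (fun w => normr_ge0 _) ws).
move: nz; rewrite /Defs.pmap big1_seq ?eqxx // => w /andP [_ ws].
by have := hn w ws; rewrite negbK => /eqP ->; rewrite scale0r.
Qed.

Section P1.
Variables (G : tdlc) (P : dmod G) (O : gset G) (d : O -> P).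
Hypothesis pO : proper_gset O.
Hypothesis eqd : equivariant d.
Hypothesis surj : forall n : P, exists x : qperm O, Defs.pmap d x = n.

Definition toq (f : FS O) : qperm O :=
  @QPerm G O (sval f) (undup (proj1_sig (cid (svalP f)))) (undup_uniq _)
    (fun w h => ltac:(rewrite mem_undup; exact: (proj2_sig (cid (svalP f)) w h))).

Definition pF (f : FSmod pO) : P := Defs.pmap d (toq f).

Lemma pF_hom : @is_hom G (FSmod pO) P pF.
Proof.
split.
  move=> a x y; rewrite /pF.
  set U := undup (supp (toq x) ++ supp (toq y) ++ supp (toq (a *: x + y))).
  have uU : uniq U by apply: undup_uniq.
  rewrite (@pmap_any _ _ _ d (toq (a *: x + y)) U uU); last first.
    by apply: cov_undup => w h; rewrite !mem_cat h !orbT.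
  rewrite (@pmap_any _ _ _ d (toq x) U uU); last first.
    by apply: cov_undup => w h; rewrite !mem_cat h.
  rewrite (@pmap_any _ _ _ d (toq y) U uU); last first.
    by apply: cov_undup => w h; rewrite !mem_cat h !orbT.
  rewrite scaler_sumr -big_split; apply: eq_bigr => w _ /=.
  by rewrite scalerDl scalerA.
move=> g x; rewrite /pF; apply: (pmap_transport eqd) => w; done.
Qed.

Lemma pF_surj n : exists f : FSmod pO, pF f = n.
Proof.
have [x <-] := surj n.
exists (exist _ (coef x) (ex_intro _ (supp x) (@supp_cov _ _ x))).
rewrite /pF (@pmap_any _ _ _ d _ (supp x)).
- by [].
- exact: supp_uniq.
- by move=> w; exact: (@supp_cov _ _ x w).
Qed.
End P1.

Lemma part1 (G : tdlc) (P : dmod G) (P_proj : projective P) (O : gset G) (d : O -> P) :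
  proper_gset O -> fin_orbits O -> surj_pmap d -> filling_is_norm d.
Proof.
move=> pO fo [eqd surj].
have idh : @is_hom G P P id by [].
have [h [hh hK]] := P_proj (FSmod pO) P (@pF G P O d pO) id (@pF_hom G P O d pO eqd) (@pF_surj G P O d pO surj) idh.
pose j := fun m => toq (h m).
have hj : hom_to_qperm j.
  split.
    by move=> a p q w; rewrite /j /= hh.1.
  by move=> g p w; rewrite /j /= hh.2.
have jK : forall m, Defs.pmap d (j m) = m by move=> m; exact: hK.
have [C Cp HC] := fill_ge_main hj eqd fo.
move=> m nz; exists (l1 (j m) / C).
  by apply: divr_gt0 => //; apply: (l1_pos_of_pmap (d := d)); rewrite jK.
move=> x px; rewrite ler_pdivrMr // mulrC.
by have := HC x; rewrite px.
Qed.

Unset Implicit Arguments.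

Theorem proposition4p4 (G : tdlc) (P : dmod G)
    (P_fg : fin_gen P) (P_proj : projective P) :
  (* every filling pseudo-norm of P is a norm *)
  (forall (O : gset G) (d : O -> P),
      proper_gset O -> fin_orbits O -> surj_pmap d -> filling_is_norm d) /\
  (* if P is a direct summand of a f.g. proper permutation module Q[O],
     then P is undistorted in Q[O] (w.r.t. any filling pseudo-norm of P) *)
  (forall (O : gset G) (i : P -> qperm O) (r : O -> P),
      proper_gset O -> fin_orbits O -> direct_summand i r ->
      forall (O' : gset G) (d : O' -> P),
        proper_gset O' -> fin_orbits O' -> surj_pmap d ->
        undistorted i d).
Proof.
split.
  by move=> O d pO fo sd; apply: (part1 P_proj pO fo sd).
by move=> O i r pO fo ds O' d pO' fo' sd; apply: (part2 fo ds fo' sd).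
Qed.
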